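(* The functor $F$ is strong monoidal from the monoidal category $(\mathbf{Perm}\text{-}\mathbf{Nom},\otimes,1)$ to $(\mathbf{Sb}\text{-}\mathbf{Nom},\times,1)$. In particular, for all nominal $\mathrm{Perm}$-sets $X,Y$, the map $p=\langle F(\pi_1),F(\pi_2)\rangle\colon F(X\otimes Y)\to F(X)\times F(Y)$, i.e. $p([m,(x,y)])=([m,x],[m,y])$, is an isomorphism of nominal $\mathrm{Sb}$-sets, natural in $X$ and $Y$.
   Context: Let $\mathbb{A}$ be a countably infinite set of atoms; $\mathrm{Sb}$ is the monoid of functions $\mathbb{A}\to\mathbb{A}$ moving only finitely many atoms (under composition), $\mathrm{Perm}\subseteq\mathrm{Sb}$ the group of bijections in it. For $M\in\{\mathrm{Sb},\mathrm{Perm}\}$, an $M$-set is a set with a monoid action; $C\subseteq\mathbb{A}$ is an $M$-support of $x$ if $m_1|_C=m_2|_C$ implies $m_1x=m_2x$ for $m_1,m_2\in M$; nominal $M$-sets are $M$-sets whose elements all have finite supports; $M\text{-}\mathbf{Nom}$ is the category of nominal $M$-sets with equivariant maps. Products in $M\text{-}\mathbf{Nom}$ are Cartesian products with pointwise action, and $1$ is a singleton. Two elements $x,y$ of nominal $\mathrm{Perm}$-sets are separated, written $x\perp y$, if they have disjoint $\mathrm{Perm}$-supports; the separated product is $X\otimes Y=\{(x,y)\in X\times Y\mid x\perp y\}$ with pointwise action, and $\pi_1,\pi_2$ are the projections. For a nominal $\mathrm{Perm}$-set $X$, $F(X)$ is $\mathrm{Sb}\times X$ modulo the least equivalence relation $\sim$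 containing $(m,gx)\sim(mg,x)$ ($g\in\mathrm{Perm}$) and $(m,x)\sim(m',x)$ whenever $m|_C=m'|_C$ for some $\mathrm{Perm}$-support $C$ of $x$; classes are written $[m,x]$, with action $n\cdot[m,x]=[nm,x]$, and $F(f)([m,x])=[m,f(x)]$. This $F$ is a functor $\mathbf{Perm}\text{-}\mathbf{Nom}\to\mathbf{Sb}\text{-}\mathbf{Nom}$. *)

(* Defs.v *)
(* Atoms are modelled by nat (a countably infinite set). *)
From Stdlib Require Import List Relations ProofIrrelevance IndefiniteDescription.
Import ListNotations.

Definition atom := nat.

Definition fin_moving (f : atom -> atom) : Prop :=
  exists l : list atom, forall a, ~ In a l -> f a = a.

Record Sb := mkSb { sb_fun :> atom -> atom; sb_fin : fin_moving sb_fun }.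

Lemma fin_moving_id : fin_moving (fun a => a).
Proof. exists nil; auto. Qed.

Lemma fin_moving_comp f g : fin_moving f -> fin_moving g -> fin_moving (fun a => f (g a)).
Proof.
  intros [l1 H1] [l2 H2]. exists (l1 ++ l2). intros a Ha.
  rewrite H2, H1; auto; intro; apply Ha; apply in_or_app; auto.
Qed.

Definition Sb_id : Sb := mkSb _ fin_moving_id.
Definition Sb_comp (m n : Sb) : Sb :=
  mkSb _ (fin_moving_comp _ _ (sb_fin m) (sb_fin n)).

Definition is_bij (f : atom -> atom) : Prop :=
  exists g, (forall a, g (f a) = a) /\ (forall a, f (g a) = a).

Record Perm := mkPerm { perm_sb :> Sb; perm_bij : is_bij perm_sb }.

Lemma is_bij_id : is_bij (fun a => a).
Proof. exists (fun a => a); split; auto. Qed.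

Lemma is_bij_comp f g : is_bij f -> is_bij g -> is_bij (fun a => f (g a)).
Proof.
  intros [f' [Hf1 Hf2]] [g' [Hg1 Hg2]]. exists (fun a => g' (f' a)).
  split; intros a; [rewrite Hf1; apply Hg1 | rewrite Hg2; apply Hf2].
Qed.

Definition Perm_id : Perm := mkPerm Sb_id is_bij_id.
Definition Perm_comp (g h : Perm) : Perm :=
  mkPerm (Sb_comp g h) (is_bij_comp _ _ (perm_bij g) (perm_bij h)).

Lemma perm_inj (g : Perm) a b : g a = g b -> a = b.
Proof.
  destruct (perm_bij g) as [g' [H1 _]]. intros E.
  rewrite <- (H1 a), <- (H1 b), E. reflexivity.
Qed.

Record PermSet := {
  ps_car :> Type;
  ps_act : Perm -> ps_car -> ps_car;
  ps_act_id : forall x, ps_act Perm_id x = x;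
  ps_act_comp : forall g h x, ps_act (Perm_comp g h) x = ps_act g (ps_act h x) }.

Definition agree_on (C : atom -> Prop) (f g : atom -> atom) : Prop :=
  forall a, C a -> f a = g a.

Definition perm_support (X : PermSet) (C : atom -> Prop) (x : X) : Prop :=
  forall g1 g2 : Perm, agree_on C g1 g2 -> ps_act X g1 x = ps_act X g2 x.

Definition perm_fsupp (X : PermSet) (l : list atom) (x : X) : Prop :=
  perm_support X (fun a => In a l) x.

Definition nominal_perm (X : PermSet) : Prop :=
  forall x : X, exists l, perm_fsupp X l x.

Definition perm_equivariant (X Y : PermSet) (f : X -> Y) : Prop :=
  forall (g : Perm) (x : X), f (ps_act X g x) = ps_act Y g (f x).

Definition separated (X Y : PermSet) (x : X) (y : Y) : Prop :=
  exists l1 l2, perm_fsupp X l1 x /\ perm_fsupp Y l2 y /\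
                (forall a, In a l1 -> ~ In a l2).

Lemma perm_fsupp_act (X : PermSet) (g : Perm) l (x : X) :
  perm_fsupp X l x -> perm_fsupp X (map g l) (ps_act X g x).
Proof.
  intros H h1 h2 Hag.
  rewrite <- !ps_act_comp. apply H. intros a Ha. simpl. apply Hag.
  apply in_map. exact Ha.
Qed.

Lemma separated_act (X Y : PermSet) (g : Perm) (x : X) (y : Y) :
  separated X Y x y -> separated X Y (ps_act X g x) (ps_act Y g y).
Proof.
  intros [l1 [l2 [H1 [H2 Hd]]]]. exists (map g l1), (map g l2).
  split; [|split].
  - apply perm_fsupp_act; auto.
  - apply perm_fsupp_act; auto.
  - intros a Ha Hb. apply in_map_iff in Ha as [a1 [E1 I1]].
    apply in_map_iff in Hb as [a2 [E2 I2]].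
    rewrite <- E2 in E1. apply perm_inj in E1. subst. exact (Hd _ I1 I2).
Qed.

Lemma sig_ext {A : Type} {P : A -> Prop} (u v : sig P) :
  proj1_sig u = proj1_sig v -> u = v.
Proof.
  destruct u as [u Hu], v as [v Hv]; simpl; intros E; subst.
  f_equal; apply proof_irrelevance.
Qed.

Definition tensor_car (X Y : PermSet) : Type :=
  { p : X * Y | separated X Y (fst p) (snd p) }.

Definition tensor_act (X Y : PermSet) (g : Perm) (p : tensor_car X Y) : tensor_car X Y :=
  exist _ (ps_act X g (fst (proj1_sig p)), ps_act Y g (snd (proj1_sig p)))
          (separated_act X Y g _ _ (proj2_sig p)).

Lemma tensor_act_id (X Y : PermSet) p : tensor_act X Y Perm_id p = p.
Proof.
  apply sig_ext. destruct p as [[x y] H]; simpl. rewrite !ps_act_id. reflexivity.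
Qed.

Lemma tensor_act_comp (X Y : PermSet) g h p :
  tensor_act X Y (Perm_comp g h) p = tensor_act X Y g (tensor_act X Y h p).
Proof.
  apply sig_ext. destruct p as [[x y] H]; simpl. rewrite !ps_act_comp. reflexivity.
Qed.

Definition tensor (X Y : PermSet) : PermSet :=
  {| ps_car := tensor_car X Y; ps_act := tensor_act X Y;
     ps_act_id := tensor_act_id X Y; ps_act_comp := tensor_act_comp X Y |}.

Definition pi1 (X Y : PermSet) (p : tensor X Y) : X := fst (proj1_sig p).
Definition pi2 (X Y : PermSet) (p : tensor X Y) : Y := snd (proj1_sig p).

Definition unitPS : PermSet :=
  {| ps_car := unit; ps_act := fun _ x => x;
     ps_act_id := fun _ => eq_refl; ps_act_comp := fun _ _ _ => eq_refl |}.

Lemma perm_fsupp_map (X Y : PermSet) (f : X -> Y) l x :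
  perm_equivariant X Y f -> perm_fsupp X l x -> perm_fsupp Y l (f x).
Proof.
  intros Hf H g1 g2 Hag. rewrite <- !Hf. f_equal. apply H; exact Hag.
Qed.

Lemma separated_map (X X' Y Y' : PermSet) (f : X -> X') (g : Y -> Y') x y :
  perm_equivariant X X' f -> perm_equivariant Y Y' g ->
  separated X Y x y -> separated X' Y' (f x) (g y).
Proof.
  intros Hf Hg [l1 [l2 [H1 [H2 Hd]]]]. exists l1, l2.
  split; [|split]; auto; eapply perm_fsupp_map; eauto.
Qed.

Definition tensor_map (X X' Y Y' : PermSet) (f : X -> X') (g : Y -> Y')
  (Hf : perm_equivariant X X' f) (Hg : perm_equivariant Y Y' g)
  (p : tensor X Y) : tensor X' Y' :=
  exist _ (f (fst (proj1_sig p)), g (snd (proj1_sig p)))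
          (separated_map X X' Y Y' f g _ _ Hf Hg (proj2_sig p)).

(** Equivalence classes are represented
    as predicates on Sb × X (using propositional/functional extensionality
    this is a genuine quotient). *)
Inductive Fgen (X : PermSet) : Sb * X -> Sb * X -> Prop :=
| Fgen_perm : forall (m : Sb) (g : Perm) (x : X),
    Fgen X (m, ps_act X g x) (Sb_comp m g, x)
| Fgen_supp : forall (m m' : Sb) (x : X) (l : list atom),
    perm_fsupp X l x -> agree_on (fun a => In a l) m m' ->
    Fgen X (m, x) (m', x).

Definition Fsim (X : PermSet) : relation (Sb * X) :=
  clos_refl_sym_trans _ (Fgen X).

Definition Fcar (X : PermSet) : Type :=
  { c : Sb * X -> Prop | exists q, c = Fsim X q }.

Definition Fcls (X : PermSet) (q : Sb * X) : Fcar X :=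
  exist _ (Fsim X q) (ex_intro _ q eq_refl).

Definition Frep (X : PermSet) (c : Fcar X) : Sb * X :=
  proj1_sig (constructive_indefinite_description _ (proj2_sig c)).

Definition Fact (X : PermSet) (n : Sb) (c : Fcar X) : Fcar X :=
  Fcls X (Sb_comp n (fst (Frep X c)), snd (Frep X c)).

Definition Fmap (X Y : PermSet) (f : X -> Y) (c : Fcar X) : Fcar Y :=
  Fcls Y (fst (Frep X c), f (snd (Frep X c))).

Definition Fp (X Y : PermSet) (u : Fcar (tensor X Y)) : Fcar X * Fcar Y :=
  (Fmap (tensor X Y) X (pi1 X Y) u, Fmap (tensor X Y) Y (pi2 X Y) u).

Definition Fprod_act (X Y : PermSet) (n : Sb) (v : Fcar X * Fcar Y) : Fcar X * Fcar Y :=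
  (Fact X n (fst v), Fact Y n (snd v)).

(* Main.v *)
Require Import Defs.
From Stdlib Require Import List Relations ProofIrrelevance IndefiniteDescription FunctionalExtensionality PropExtensionality Arith Lia.
Import ListNotations.

Lemma Sb_ext (m n : Sb) : (forall a, m a = n a) -> m = n.
Proof.
  destruct m as [mf mp], n as [nf np]; simpl; intros H.
  assert (mf = nf) by (apply functional_extensionality; auto). subst.
  f_equal; apply proof_irrelevance.
Qed.

Lemma Perm_ext (g h : Perm) : (forall a, g a = h a) -> g = h.
Proof.
  destruct g as [g gb], h as [h hb]; simpl; intros H.
  assert (g = h) by (apply Sb_ext; auto). subst.
  f_equal; apply proof_irrelevance.
Qed.

Definition pinv_fun (g : Perm) : atom -> atom :=
  proj1_sig (constructive_indefinite_description _ (perm_bij g)).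
Lemma pinv_l (g : Perm) a : pinv_fun g (g a) = a.
Proof. unfold pinv_fun. destruct (constructive_indefinite_description _ _) as [f [H1 H2]]; simpl. apply H1. Qed.
Lemma pinv_r (g : Perm) a : g (pinv_fun g a) = a.
Proof. unfold pinv_fun. destruct (constructive_indefinite_description _ _) as [f [H1 H2]]; simpl. apply H2. Qed.
Lemma pinv_fin (g : Perm) : fin_moving (pinv_fun g).
Proof.
  destruct (sb_fin g) as [l Hl]. exists l. intros a Ha.
  apply (perm_inj g). rewrite pinv_r. symmetry. apply Hl; auto.
Qed.
Lemma pinv_bij g : is_bij (pinv_fun g).
Proof. exists g; split; intros a; [apply pinv_r | apply pinv_l]. Qed.
Definition Perm_inv (g : Perm) : Perm := mkPerm (mkSb _ (pinv_fin g)) (pinv_bij g).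
Lemma Perm_inv_l (g : Perm) a : Perm_inv g (g a) = a.
Proof. apply pinv_l. Qed.
Lemma Perm_inv_r (g : Perm) a : g (Perm_inv g a) = a.
Proof. apply pinv_r. Qed.
Lemma act_inv_l (X : PermSet) g x : ps_act X (Perm_inv g) (ps_act X g x) = x.
Proof.
  rewrite <- ps_act_comp. replace (Perm_comp (Perm_inv g) g) with Perm_id. apply ps_act_id.
  apply Perm_ext; intros a. symmetry. apply (Perm_inv_l g a).
Qed.

Definition swf (a b c : atom) : atom := if Nat.eqb c a then b else if Nat.eqb c b then a else c.
Ltac eqbs := repeat match goal with |- context [Nat.eqb ?x ?y] => destruct (Nat.eqb_spec x y) end.
Lemma swf_inv a b c : swf a b (swf a b c) = c.
Proof. unfold swf; destruct (Nat.eqb_spec c a); destruct (Nat.eqb_spec c b); eqbs; lia. Qed.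
Lemma swf_fin a b : fin_moving (swf a b).
Proof. exists [a;b]; intros c Hc; unfold swf; eqbs; subst; try reflexivity; exfalso; apply Hc; simpl; auto. Qed.
Definition swp (a b : atom) : Perm :=
  mkPerm (mkSb (swf a b) (swf_fin a b)) (ex_intro _ (swf a b) (conj (swf_inv a b) (swf_inv a b))).

Lemma ext_perm (L : list atom) (f : atom -> atom) :
  (forall a b, In a L -> In b L -> f a = f b -> a = b) ->
  exists h : Perm, forall a, In a L -> h a = f a.
Proof.
  induction L as [|a L IH]; intros Hinj.
  - exists Perm_id; intros a [].
  - destruct IH as [h' Hh'].
    { intros x y Hx Hy; apply Hinj; simpl; auto. }
    destruct (in_dec Nat.eq_dec a L) as [Ha|Ha].
    + exists h'. intros c [<-|Hc]; auto.
    + exists (Perm_comp (swp (h' a) (f a)) h'). intros c Hc;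
        change (swf (h' a) (f a) (h' c) = f c); destruct Hc as [<-|Hc].
      * unfold swf. rewrite Nat.eqb_refl. reflexivity.
      * rewrite (Hh' c Hc). unfold swf.
        destruct (Nat.eqb_spec (f c) (h' a)) as [E|E].
        { exfalso. rewrite <- (Hh' c Hc) in E. apply perm_inj in E. subst; contradiction. }
        destruct (Nat.eqb_spec (f c) (f a)) as [E2|E2].
        { exfalso. apply Hinj in E2; simpl; auto. subst; contradiction. }
        reflexivity.
Qed.

Lemma bound (l : list atom) : exists M, forall a, In a l -> a < M.
Proof.
  induction l as [|x l [M HM]]. exists 0; intros a [].
  exists (S (max x M)); intros a [<-|H]; [lia| specialize (HM a H); lia].
Qed.

Definition inter (l1 l2 : list atom) :=
  filter (fun a => if in_dec Nat.eq_dec a l2 then true else false) l1.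
Lemma in_inter a l1 l2 : In a (inter l1 l2) <-> In a l1 /\ In a l2.
Proof. unfold inter; rewrite filter_In. destruct (in_dec Nat.eq_dec a l2); intuition congruence. Qed.

Lemma fsupp_mono X l l' (x : ps_car X) : perm_fsupp X l x -> (forall a, In a l -> In a l') -> perm_fsupp X l' x.
Proof. intros H Hs g1 g2 Hag. apply H. intros a Ha. apply Hag, Hs, Ha. Qed.

Lemma fsupp_inter X l1 l2 (x : ps_car X) :
  perm_fsupp X l1 x -> perm_fsupp X l2 x -> perm_fsupp X (inter l1 l2) x.
Proof.
  intros H1 H2 g1 g2 Hag.
  assert (Hag' : forall a, In a l1 -> In a l2 -> g1 a = g2 a) by (intros a Ha Hb; apply Hag, in_inter; auto).
  set (U := l1 ++ l2).
  assert (U1 : forall a, In a l1 -> In a U) by (intros; unfold U; apply in_or_app; auto).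
  assert (U2 : forall a, In a l2 -> In a U) by (intros; unfold U; apply in_or_app; auto).
  destruct (bound (U ++ map g1 U ++ map g2 U)) as [M HM].
  assert (HU : forall a, In a U -> a < M /\ g1 a < M /\ g2 a < M).
  { intros a Ha; repeat split; apply HM; rewrite !in_app_iff;
      [left|right;left|right;right]; auto using in_map. }
  destruct (ext_perm U (fun a => if in_dec Nat.eq_dec a l1 then g1 a else a + M)) as [h1 Hh1].
  { intros a b Ha Hb; pose proof (HU a Ha); pose proof (HU b Hb).
    destruct (in_dec Nat.eq_dec a l1), (in_dec Nat.eq_dec b l1); intros E;
      [apply (perm_inj g1); auto | lia | lia | lia]. }
  assert (B1 : forall a, In a U -> h1 a < 2 * M).
  { intros a Ha; rewrite Hh1 by auto; pose proof (HU a Ha); destruct in_dec; lia. }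
  destruct (ext_perm U (fun a => if in_dec Nat.eq_dec a l2 then h1 a else a + 2 * M)) as [h2 Hh2].
  { intros a b Ha Hb; pose proof (B1 a Ha); pose proof (B1 b Hb).
    destruct (in_dec Nat.eq_dec a l2), (in_dec Nat.eq_dec b l2); intros E;
      [apply (perm_inj h1); auto | lia | lia | lia]. }
  destruct (ext_perm U (fun a => if in_dec Nat.eq_dec a l1 then h2 a else g2 a)) as [h3 Hh3].
  { intros a b Ha Hb; pose proof (HU a Ha); pose proof (HU b Hb).
    destruct (in_dec Nat.eq_dec a l1) as [a1|a1], (in_dec Nat.eq_dec b l1) as [b1|b1]; intros E.
    - apply (perm_inj h2); auto.
    - rewrite Hh2 in E by auto. destruct (in_dec Nat.eq_dec a l2) as [a2|a2].
      + rewrite Hh1 in E by auto. destruct (in_dec Nat.eq_dec a l1); [|contradiction].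
        rewrite Hag' in E by auto. apply perm_inj in E. subst; contradiction.
      + lia.
    - rewrite Hh2 in E by auto. destruct (in_dec Nat.eq_dec b l2) as [b2|b2].
      + rewrite Hh1 in E by auto. destruct (in_dec Nat.eq_dec b l1); [|contradiction].
        rewrite Hag' in E by auto. apply perm_inj in E. subst; contradiction.
      + lia.
    - apply (perm_inj g2); auto. }
  transitivity (ps_act X h1 x).
  { apply H1; intros a Ha. rewrite Hh1 by auto. destruct in_dec; [reflexivity|contradiction]. }
  transitivity (ps_act X h2 x).
  { apply H2; intros a Ha. rewrite Hh2 by auto. destruct in_dec; [reflexivity|contradiction]. }
  transitivity (ps_act X h3 x).
  { apply H1; intros a Ha. rewrite Hh3 by auto. destruct in_dec; [reflexivity|contradiction]. }
  apply H2; intros a Ha. rewrite Hh3 by auto. destruct (in_dec Nat.eq_dec a l1); [|reflexivity].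
  rewrite Hh2 by auto. destruct in_dec; [|contradiction]. rewrite Hh1 by auto.
  destruct in_dec; [|contradiction]. auto.
Qed.
Lemma Fcls_eq (X : PermSet) q q' : Fsim X q q' -> Fcls X q = Fcls X q'.
Proof.
  intros H. apply sig_ext; simpl. apply functional_extensionality; intros r.
  apply propositional_extensionality. split; intros H'.
  - eapply rst_trans; [apply rst_sym; exact H| exact H'].
  - eapply rst_trans; eauto.
Qed.

Lemma Fcls_inj (X : PermSet) q q' : Fcls X q = Fcls X q' -> Fsim X q q'.
Proof.
  intros H. apply (f_equal (@proj1_sig _ _)) in H; simpl in H. rewrite H. apply rst_refl.
Qed.

Lemma Fcls_Frep (X : PermSet) c : Fcls X (Frep X c) = c.
Proof.
  destruct c as [c Hc]. apply sig_ext; unfold Frep; simpl.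
  destruct (constructive_indefinite_description _ Hc) as [r Hr]; simpl. symmetry; exact Hr.
Qed.

Lemma Fcls_surj (X : PermSet) c : exists q, c = Fcls X q.
Proof. exists (Frep X c); symmetry; apply Fcls_Frep. Qed.

Lemma Fsim_map (X Y : PermSet) (f : X -> Y) : perm_equivariant X Y f -> forall q q',
  Fsim X q q' -> Fsim Y (fst q, f (snd q)) (fst q', f (snd q')).
Proof.
  intros Hf q q' H; induction H as [q q' G| q | q q' _ IH | q1 q2 q3 _ IH1 _ IH2].
  - apply rst_step. destruct G as [m g x | m m' x l Hl Ha]; simpl.
    + rewrite Hf. apply Fgen_perm.
    + eapply Fgen_supp; [apply perm_fsupp_map; eauto | exact Ha].
  - apply rst_refl.
  - apply rst_sym; auto.
  - eapply rst_trans; eauto.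
Qed.

Lemma Fmap_cls (X Y : PermSet) (f : X -> Y) (Hf : perm_equivariant X Y f) q :
  Fmap X Y f (Fcls X q) = Fcls Y (fst q, f (snd q)).
Proof. unfold Fmap. apply Fcls_eq. apply Fsim_map; auto. apply Fcls_inj. apply Fcls_Frep. Qed.

Lemma Fsim_act (X : PermSet) (n : Sb) q q' :
  Fsim X q q' -> Fsim X (Sb_comp n (fst q), snd q) (Sb_comp n (fst q'), snd q').
Proof.
  intros H; induction H as [q q' G| q | q q' _ IH | q1 q2 q3 _ IH1 _ IH2].
  - apply rst_step. destruct G as [m g x | m m' x l Hl Ha]; simpl.
    + replace (Sb_comp n (Sb_comp m g)) with (Sb_comp (Sb_comp n m) g)
        by (apply Sb_ext; reflexivity). apply Fgen_perm.
    + eapply Fgen_supp; [exact Hl|]. intros a Ha'; simpl. rewrite Ha; auto.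
  - apply rst_refl.
  - apply rst_sym; auto.
  - eapply rst_trans; eauto.
Qed.

Lemma Fact_cls (X : PermSet) (n : Sb) q : Fact X n (Fcls X q) = Fcls X (Sb_comp n (fst q), snd q).
Proof. unfold Fact. apply Fcls_eq. apply Fsim_act. apply Fcls_inj. apply Fcls_Frep. Qed.

Lemma pi1_eq (X Y : PermSet) : perm_equivariant (tensor X Y) X (pi1 X Y).
Proof. intros g p; reflexivity. Qed.
Lemma pi2_eq (X Y : PermSet) : perm_equivariant (tensor X Y) Y (pi2 X Y).
Proof. intros g p; reflexivity. Qed.

Lemma Fp_cls (X Y : PermSet) (m : Sb) (w : tensor X Y) :
  Fp X Y (Fcls (tensor X Y) (m, w)) = (Fcls X (m, pi1 X Y w), Fcls Y (m, pi2 X Y w)).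
Proof. unfold Fp. rewrite !Fmap_cls by (apply pi1_eq || apply pi2_eq). reflexivity. Qed.

Definition Rrel (X : PermSet) (q q' : Sb * X) : Prop :=
  exists (g : Perm) (l : list atom), perm_fsupp X l (snd q) /\ snd q' = ps_act X g (snd q) /\
    forall a, In a l -> fst q a = fst q' (g a).

Lemma Rrel_Fsim (X : PermSet) q q' : Rrel X q q' -> Fsim X q q'.
Proof.
  destruct q as [m x], q' as [m' x']; intros [g [l [Hl [E Ha]]]]; simpl in *. subst x'.
  eapply rst_trans.
  - apply rst_step. eapply Fgen_supp with (m' := Sb_comp m' g); [exact Hl|]. intros a Ha'; simpl; auto.
  - apply rst_sym, rst_step, Fgen_perm.
Qed.

Lemma Fsim_Rrel (X : PermSet) : nominal_perm X -> forall q q', Fsim X q q' -> Rrel X q q'.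
Proof.
  intros HX q q' H; induction H as [q q' G| q | q q' _ IH | q1 q2 q3 _ IH1 _ IH2].
  - destruct G as [m g x | m m' x l Hl Ha].
    + destruct (HX (ps_act X g x)) as [l Hl].
      exists (Perm_inv g), l; simpl; repeat split; auto.
      * symmetry; apply act_inv_l.
      * intros a _. simpl. rewrite pinv_r. reflexivity.
    + exists Perm_id, l; simpl; repeat split; auto. symmetry; apply ps_act_id.
  - destruct q as [m x]. destruct (HX x) as [l Hl]. exists Perm_id, l; simpl; repeat split; auto.
    symmetry; apply ps_act_id.
  - destruct q as [m x], q' as [m' x']. destruct IH as [g [l [Hl [E Ha]]]]; simpl in *. subst x'.
    exists (Perm_inv g), (map g l); simpl; repeat split.
    + apply perm_fsupp_act; auto.
    + symmetry; apply act_inv_l.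
    + intros b Hb. apply in_map_iff in Hb as [a [<- Ha']]. rewrite ?Perm_inv_l, ?pinv_l. symmetry; auto.
  - destruct q1 as [m x], q2 as [m' x'], q3 as [m'' x''].
    destruct IH1 as [g [l [Hl [E Ha]]]], IH2 as [h [l' [Hl' [E' Ha']]]]; simpl in *. subst x' x''.
    exists (Perm_comp h g), (inter l (map (Perm_inv g) l')); repeat split.
    + apply fsupp_inter; auto. simpl.
      pose proof (perm_fsupp_act X (Perm_inv g) _ _ Hl') as Hs. rewrite act_inv_l in Hs. exact Hs.
    + simpl. symmetry; apply ps_act_comp.
    + intros a Hin. apply in_inter in Hin as [H1 H2]. apply in_map_iff in H2 as [b [Eb Hb]].
      simpl. rewrite Ha by auto. apply Ha'. subst a. rewrite ?Perm_inv_r, ?pinv_r. auto.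
Qed.

Lemma Fp_inj (X Y : PermSet) : nominal_perm X -> nominal_perm Y ->
  forall u u', Fp X Y u = Fp X Y u' -> u = u'.
Proof.
  intros HX HY u u' E.
  destruct (Fcls_surj _ u) as [[m w] ->], (Fcls_surj _ u') as [[m' w'] ->].
  rewrite !Fp_cls in E. pose proof (f_equal fst E) as E1; pose proof (f_equal snd E) as E2; cbn [fst snd] in E1, E2.
  apply Fcls_inj, Fsim_Rrel in E1; auto. apply Fcls_inj, Fsim_Rrel in E2; auto.
  destruct E1 as [g [l1 [Hl1 [Ex Ha1]]]], E2 as [h [l2 [Hl2 [Ey Ha2]]]]; simpl in *.
  destruct w as [[x y] sep], w' as [[x' y'] sep'].
  pose proof sep as [s1 [s2 [Hs1 [Hs2 Hd]]]]. pose proof sep' as [t1 [t2 [Ht1 [Ht2 Hd']]]].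
  unfold pi1, pi2 in *; simpl in *. subst x' y'.
  set (L1 := inter (inter l1 s1) (map (Perm_inv g) t1)).
  set (L2 := inter (inter l2 s2) (map (Perm_inv h) t2)).
  assert (HL1 : perm_fsupp X L1 x).
  { apply fsupp_inter; [apply fsupp_inter; auto|].
    pose proof (perm_fsupp_act X (Perm_inv g) _ _ Ht1) as Hs. rewrite act_inv_l in Hs. exact Hs. }
  assert (HL2 : perm_fsupp Y L2 y).
  { apply fsupp_inter; [apply fsupp_inter; auto|].
    pose proof (perm_fsupp_act Y (Perm_inv h) _ _ Ht2) as Hs. rewrite act_inv_l in Hs. exact Hs. }
  assert (P1 : forall a, In a L1 -> In a l1 /\ In a s1 /\ In (g a) t1).
  { intros a Ha. unfold L1 in Ha. rewrite !in_inter in Ha. destruct Ha as [[A B] C].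
    apply in_map_iff in C as [b [Eb Hb]]. subst a. rewrite ?Perm_inv_r, ?pinv_r. auto. }
  assert (P2 : forall a, In a L2 -> In a l2 /\ In a s2 /\ In (h a) t2).
  { intros a Ha. unfold L2 in Ha. rewrite !in_inter in Ha. destruct Ha as [[A B] C].
    apply in_map_iff in C as [b [Eb Hb]]. subst a. rewrite ?Perm_inv_r, ?pinv_r. auto. }
  destruct (ext_perm (L1 ++ L2) (fun a => if in_dec Nat.eq_dec a L1 then g a else h a)) as [k Hk].
  { intros a b Ha Hb. apply in_app_or in Ha, Hb.
    destruct (in_dec Nat.eq_dec a L1) as [a1|a1], (in_dec Nat.eq_dec b L1) as [b1|b1]; intros Eab.
    - apply (perm_inj g); auto.
    - destruct Hb as [Hb|Hb]; [contradiction|]. exfalso. apply (Hd' (g a)); [apply P1; auto|].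
      rewrite Eab; apply P2; auto.
    - destruct Ha as [Ha|Ha]; [contradiction|]. exfalso. apply (Hd' (g b)); [apply P1; auto|].
      rewrite <- Eab; apply P2; auto.
    - apply (perm_inj h); auto. }
  assert (K1 : forall a, In a L1 -> k a = g a).
  { intros a Ha. rewrite Hk by (apply in_or_app; auto). destruct in_dec; [reflexivity|contradiction]. }
  assert (K2 : forall a, In a L2 -> k a = h a).
  { intros a Ha. rewrite Hk by (apply in_or_app; auto). destruct in_dec as [Hin|]; [|reflexivity].
    exfalso. apply (Hd a); [apply P1|apply P2]; auto. }
  apply Fcls_eq, Rrel_Fsim. exists k, (L1 ++ L2); simpl; repeat split.
  - intros k1 k2 Hag. apply sig_ext. simpl. f_equal; [apply HL1 | apply HL2];
      intros a Ha; apply Hag; apply in_or_app; auto.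
  - apply sig_ext. simpl. f_equal; [apply HL1 | apply HL2]; intros a Ha.
    + symmetry; auto.
    + symmetry; auto.
  - intros a Ha. apply in_app_or in Ha as [Ha|Ha].
    + rewrite K1 by auto. apply Ha1, P1, Ha.
    + rewrite K2 by auto. apply Ha2, P2, Ha.
Qed.

Lemma Fp_surj (X Y : PermSet) : nominal_perm X -> nominal_perm Y ->
  forall v, exists u, Fp X Y u = v.
Proof.
  intros HX HY [c1 c2].
  destruct (Fcls_surj _ c1) as [[m x] ->], (Fcls_surj _ c2) as [[n y] ->].
  destruct (HX x) as [s1 Hs1], (HY y) as [s2 Hs2].
  destruct (bound s1) as [M HM].
  destruct (ext_perm s2 (fun a => a + M)) as [g Hg]. { intros; lia. }
  assert (sep : separated X Y x (ps_act Y g y)).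
  { exists s1, (map g s2); repeat split; auto. apply perm_fsupp_act; auto.
    intros a Ha Hb. apply in_map_iff in Hb as [b [<- Hb]]. rewrite Hg in Ha by auto.
    specialize (HM _ Ha). lia. }
  set (kf := fun b => if in_dec Nat.eq_dec b s1 then m b
              else if in_dec Nat.eq_dec b (map g s2) then n (b - M) else b).
  assert (kfin : fin_moving kf).
  { exists (s1 ++ map g s2). intros b Hb. unfold kf.
    destruct in_dec; [exfalso; apply Hb; apply in_or_app; auto|].
    destruct in_dec; [exfalso; apply Hb; apply in_or_app; auto|reflexivity]. }
  exists (Fcls (tensor X Y) (mkSb kf kfin, exist _ (x, ps_act Y g y) sep)).
  rewrite Fp_cls. unfold pi1, pi2; simpl. f_equal.
  - apply Fcls_eq, rst_step. eapply Fgen_supp; [exact Hs1|]. intros a Ha; simpl; unfold kf.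
    destruct in_dec; [reflexivity|contradiction].
  - apply Fcls_eq. eapply rst_trans; [apply rst_step, Fgen_perm|].
    apply rst_step. eapply Fgen_supp; [exact Hs2|]. intros a Ha; simpl; unfold kf.
    rewrite Hg by auto. destruct in_dec as [Hin|]. { specialize (HM _ Hin); lia. }
    destruct in_dec as [|Hn]. { f_equal; lia. }
    exfalso; apply Hn; rewrite <- Hg by auto; apply in_map; auto.
Qed.
Theorem mainTheorem2 :
  (* unit: F(1) ≅ 1, i.e. F(1) is a singleton *)
  (exists c0 : Fcar unitPS, forall c : Fcar unitPS, c = c0) /\
  (* p is given by p([m,(x,y)]) = ([m,x],[m,y]) and is an isomorphism of
     Sb-sets (an Sb-equivariant bijection) *)
  (forall X Y : PermSet, nominal_perm X -> nominal_perm Y ->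
     (forall (m : Sb) (w : tensor X Y),
        Fp X Y (Fcls (tensor X Y) (m, w)) =
        (Fcls X (m, pi1 X Y w), Fcls Y (m, pi2 X Y w))) /\
     (forall (n : Sb) (u : Fcar (tensor X Y)),
        Fp X Y (Fact (tensor X Y) n u) = Fprod_act X Y n (Fp X Y u)) /\
     (exists q : Fcar X * Fcar Y -> Fcar (tensor X Y),
        (forall u, q (Fp X Y u) = u) /\ (forall v, Fp X Y (q v) = v))) /\
  (* naturality in X and Y *)
  (forall (X X' Y Y' : PermSet) (f : X -> X') (g : Y -> Y')
          (Hf : perm_equivariant X X' f) (Hg : perm_equivariant Y Y' g),
     nominal_perm X -> nominal_perm X' -> nominal_perm Y -> nominal_perm Y' ->
     forall u : Fcar (tensor X Y),
       Fp X' Y' (Fmap (tensor X Y) (tensor X' Y') (tensor_map X X' Y Y' f g Hf Hg) u) =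
       (Fmap X X' f (fst (Fp X Y u)), Fmap Y Y' g (snd (Fp X Y u)))) /\
  (* associativity coherence: F(α) relates [m,((x,y),z)] and [m,(x,(y,z))] *)
  (forall (X Y Z : PermSet), nominal_perm X -> nominal_perm Y -> nominal_perm Z ->
     forall (m : Sb) (x : X) (y : Y) (z : Z)
       (hxy : separated X Y x y)
       (hxy_z : separated (tensor X Y) Z (exist _ (x, y) hxy) z)
       (hyz : separated Y Z y z)
       (hx_yz : separated X (tensor Y Z) x (exist _ (y, z) hyz)),
     let u := Fcls (tensor (tensor X Y) Z) (m, exist _ (exist _ (x, y) hxy, z) hxy_z) in
     let v := Fcls (tensor X (tensor Y Z)) (m, exist _ (x, exist _ (y, z) hyz) hx_yz) in
     fst (Fp X Y (fst (Fp (tensor X Y) Z u))) = fst (Fp X (tensor Y Z) v) /\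
     snd (Fp X Y (fst (Fp (tensor X Y) Z u))) = fst (Fp Y Z (snd (Fp X (tensor Y Z) v))) /\
     snd (Fp (tensor X Y) Z u) = snd (Fp Y Z (snd (Fp X (tensor Y Z) v)))) /\
  (* unit coherence: the unitors X⊗1 -> X, 1⊗X -> X are the projections *)
  (forall X : PermSet, nominal_perm X ->
     (forall u : Fcar (tensor X unitPS),
        fst (Fp X unitPS u) = Fmap (tensor X unitPS) X (pi1 X unitPS) u) /\
     (forall u : Fcar (tensor unitPS X),
        snd (Fp unitPS X u) = Fmap (tensor unitPS X) X (pi2 unitPS X) u)).
Proof.
  split.
  { exists (Fcls unitPS (Sb_id, tt)). intros c. destruct (Fcls_surj _ c) as [[m t] ->].
    change unit in t. destruct t. apply Fcls_eq, rst_step.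
    eapply Fgen_supp with (l := []); [intros g1 g2 _; reflexivity | intros a []]. }
  split.
  { intros X Y HX HY. split; [intros; apply Fp_cls|]. split.
    - intros n u. destruct (Fcls_surj _ u) as [[m w] ->]. rewrite Fact_cls. cbn [fst snd].
      rewrite !Fp_cls. unfold Fprod_act. cbn [fst snd]. rewrite !Fact_cls. reflexivity.
    - set (q := fun v => proj1_sig (constructive_indefinite_description _ (Fp_surj X Y HX HY v))).
      assert (Hq : forall v, Fp X Y (q v) = v).
      { intros v; unfold q; destruct (constructive_indefinite_description _ _); simpl; auto. }
      exists q; split; [intros u; apply (Fp_inj X Y HX HY); apply Hq | exact Hq]. }
  split.
  { intros X X' Y Y' f g Hf Hg _ _ _ _ u.
    destruct (Fcls_surj _ u) as [[m w] ->].
    rewrite Fmap_cls.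
    2:{ intros h p; apply sig_ext; simpl; rewrite Hf, Hg; reflexivity. }
    cbn [fst snd]. rewrite !Fp_cls. cbn [fst snd]. rewrite !Fmap_cls by auto. reflexivity. }
  split.
  { intros X Y Z HX HY HZ m x y z hxy hxy_z hyz hx_yz u v. unfold u, v.
    rewrite !Fp_cls. cbn [fst snd]. rewrite !Fp_cls. cbn [fst snd]. repeat split. }
  intros X _. split; intros; reflexivity.
Qed.
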